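(* Every proper quasi-tree is $(1,C)$-quasi-isometric to a locally finite simplicial tree, for some $C\geqslant 0$.
   Context: A quasi-tree is a geodesic metric space quasi-isometric to a simplicial tree; proper means closed balls are compact. A simplicial tree is a 1-dimensional simplicial complex which is an $\mathbb{R}$-tree for the path metric with unit edges; locally finite means each vertex has finitely many neighbours. A $(1,C)$-quasi-isometry $f$ satisfies $d(a,b)-C\leqslant d(f(a),f(b))\leqslant d(a,b)+C$ and has $C$-dense image. *)

(* Defs.v *)
From Stdlib Require Import Reals Lra List ClassicalEpsilon.
Import ListNotations.
Open Scope R_scope.
Set Implicit Arguments.

Definition is_metric (X : Type) (d : X -> X -> R) : Prop :=
  (forall x y, 0 <= d x y) /\
  (forall x y, d x y = 0 <-> x = y) /\
  (forall x y, d x y = d y x) /\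
  (forall x y z, d x z <= d x y + d y z).

Definition open_set (X : Type) (d : X -> X -> R) (U : X -> Prop) : Prop :=
  forall x, U x -> exists r, 0 < r /\ forall y, d x y < r -> U y.

Definition compact_set (X : Type) (d : X -> X -> R) (K : X -> Prop) : Prop :=
  forall (I : Type) (U : I -> X -> Prop),
    (forall i, open_set d (U i)) ->
    (forall x, K x -> exists i, U i x) ->
    exists l : list I, forall x, K x -> exists i, In i l /\ U i x.

Definition closed_ball (X : Type) (d : X -> X -> R) (x : X) (r : R) : X -> Prop :=
  fun y => d x y <= r.

Definition proper (X : Type) (d : X -> X -> R) : Prop :=
  forall x r, compact_set d (closed_ball d x r).

Definition geodesic (X : Type) (d : X -> X -> R) : Prop :=
  forall x y, exists g : R -> X,
    g 0 = x /\ g (d x y) = y /\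
    forall s t, 0 <= s <= d x y -> 0 <= t <= d x y ->
      d (g s) (g t) = Rabs (s - t).

Definition quasi_isometry (X Y : Type) (dX : X -> X -> R) (dY : Y -> Y -> R)
  (K C : R) (f : X -> Y) : Prop :=
  (forall a b, (1 / K) * dX a b - C <= dY (f a) (f b) <= K * dX a b + C) /\
  (forall y, exists x, dY (f x) y <= C).

Definition one_C_quasi_isometry (X Y : Type) (dX : X -> X -> R) (dY : Y -> Y -> R)
  (C : R) (f : X -> Y) : Prop :=
  (forall a b, dX a b - C <= dY (f a) (f b) <= dX a b + C) /\
  (forall y, exists x, dY (f x) y <= C).

(* A 1-dimensional simplicial complex: vertex type V, edge type E, each edge
   given with an (arbitrary) orientation src/tgt. *)

Section Graph.
Variables (V E : Type) (src tgt : E -> V).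

Definition adj (u v : V) : Prop :=
  exists e, (src e = u /\ tgt e = v) \/ (src e = v /\ tgt e = u).

Definition simplicial : Prop :=
  (forall e, src e <> tgt e) /\
  (forall e e', (src e = src e' /\ tgt e = tgt e') \/
                (src e = tgt e' /\ tgt e = src e') -> e = e').

Inductive walk : V -> V -> nat -> Prop :=
  | walk_nil v : walk v v 0
  | walk_cons u v w n : adj u v -> walk v w n -> walk u w (S n).

Definition connected : Prop := forall u v, exists n, walk u v n.

Fixpoint chain (l : list V) : Prop :=
  match l with
  | x :: ((y :: _) as t) => adj x y /\ chain t
  | _ => True
  end.

Definition simple_path (u v : V) (l : list V) : Prop :=
  hd_error l = Some u /\ last l u = v /\ NoDup l /\ chain l.

Definition simplicial_tree : Prop :=
  simplicial /\ connected /\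
  forall u v l1 l2, simple_path u v l1 -> simple_path u v l2 -> l1 = l2.

Definition locally_finite : Prop :=
  forall v, exists l : list V, forall u, adj v u -> In u l.

(* combinatorial distance: least length of a walk (0 if none) *)
Definition graph_dist (u v : V) : R :=
  INR (epsilon (inhabits 0%nat)
         (fun n => walk u v n /\ forall m, walk u v m -> (n <= m)%nat)).

(* Points of the geometric realisation: vertices, and interior points of
   edges (PE e t is the point at distance t from src e, 0 < t < 1). *)
Inductive prepoint : Type :=
  | PV : V -> prepoint
  | PE : E -> R -> prepoint.

Definition valid_point (p : prepoint) : Prop :=
  match p with PV _ => True | PE _ t => 0 < t < 1 end.

Definition tpoint : Type := { p : prepoint | valid_point p }.

(* endpoints of the closed cell containing p, with distance to them *)
Definition ends (p : prepoint) : list (V * R) :=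
  match p with
  | PV v => [(v, 0)]
  | PE e t => [(src e, t); (tgt e, 1 - t)]
  end.

Definition list_min (l : list R) : R :=
  match l with nil => 0 | x :: l' => fold_left Rmin l' x end.

(* Path metric (unit edge lengths) of the realisation of a tree: distance
   within a common edge, otherwise shortest route through endpoints. *)
Definition pre_tdist (p q : prepoint) : R :=
  match p, q with
  | PE e s, PE e' t =>
      if excluded_middle_informative (e = e') then Rabs (s - t)
      else list_min (flat_map (fun a => map (fun b => snd a + graph_dist (fst a) (fst b) + snd b) (ends q)) (ends p))
  | _, _ =>
      list_min (flat_map (fun a => map (fun b => snd a + graph_dist (fst a) (fst b) + snd b) (ends q)) (ends p))
  end.

Definition tdist (p q : tpoint) : R := pre_tdist (proj1_sig p) (proj1_sig q).

End Graph.

Definition quasi_tree (X : Type) (d : X -> X -> R) : Prop :=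
  is_metric d /\ geodesic d /\
  exists (V E : Type) (src tgt : E -> V),
    @simplicial_tree V E src tgt /\
    exists (K C : R) (f : X -> tpoint V E),
      1 <= K /\ 0 <= C /\ quasi_isometry d (@tdist V E src tgt) K C f.

(* Main.v *)
Require Import Defs.
From Stdlib Require Import Reals Lra Lia ZArith List Classical ClassicalEpsilon FunctionalExtensionality PropExtensionality ProofIrrelevance.
Import ListNotations.
Open Scope R_scope.
Set Implicit Arguments.
Unset Strict Implicit.

Lemma min_exists (P : nat -> Prop) : (exists n, P n) -> exists n, P n /\ forall m, P m -> (n <= m)%nat.
Proof.
  intros [n Hn].
  revert Hn. pattern n. apply (well_founded_induction Wf_nat.lt_wf). clear n.
  intros n IH Hn.
  destruct (classic (exists m, P m /\ (m < n)%nat)) as [[m [Hm Hlt]]|Hno].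
  - exact (IH m Hlt Hm).
  - exists n; split; auto. intros m Hm. destruct (Nat.lt_ge_cases m n); auto.
    exfalso; apply Hno; eauto.
Qed.

Section G.
Variables (V E : Type) (src tgt : E -> V).
Notation adj := (adj src tgt).
Notation walk := (walk src tgt).

Lemma adj_sym u v : adj u v -> adj v u.
Proof. intros [e [[H1 H2]|[H1 H2]]]; exists e; tauto. Qed.

Inductive pth : V -> V -> list V -> Prop :=
| pth1 v : pth v v [v]
| pth2 u v w l : adj u v -> pth v w l -> pth u w (u :: l).

Lemma walk_snoc u v w n : walk u v n -> adj v w -> walk u w (S n).
Proof.
  induction 1; intros Ha.
  - apply walk_cons with w; auto. constructor.
  - apply walk_cons with v; auto.
Qed.

Lemma walk_app u v w n m : walk u v n -> walk v w m -> walk u w (n + m).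
Proof.
  induction 1; intros Hw; simpl; auto.
  apply walk_cons with v; auto.
Qed.

Lemma walk_sym u v n : walk u v n -> walk v u n.
Proof.
  induction 1. constructor.
  apply walk_snoc with v; auto. apply adj_sym; auto.
Qed.

Lemma walk_pth u v n : walk u v n -> exists l, pth u v l /\ length l = S n.
Proof.
  induction 1.
  - exists [v]; split; [constructor|reflexivity].
  - destruct IHwalk as [l [H1 H2]]. exists (u :: l); split.
    + apply pth2 with v; auto.
    + simpl; lia.
Qed.

Lemma pth_walk u v l : pth u v l -> walk u v (pred (length l)).
Proof.
  induction 1 as [v|u v w l Ha Hp IH]. constructor.
  simpl. destruct Hp; simpl in *.
  - apply walk_cons with v; auto.
  - apply walk_cons with u0; auto.
Qed.

Lemma pth_hd u v l : pth u v l -> exists l', l = u :: l'.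
Proof. destruct 1; eauto. Qed.

Lemma pth_last_in u v l : pth u v l -> In v l.
Proof. induction 1; simpl; auto. Qed.

Lemma pth_first_in u v l : pth u v l -> In u l.
Proof. destruct 1; simpl; auto. Qed.

Lemma pth_app u v w l1 l2 : pth u v l1 -> pth v w l2 ->
  exists l, pth u w l /\ (forall x, In x l -> In x l1 \/ In x l2) /\ (length l < length l1 + length l2)%nat.
Proof.
  induction 1; intros H2.
  - exists l2. split; [exact H2|]. split; [intros x Hx; right; exact Hx|]. simpl; lia.
  - destruct (IHpth H2) as [l' [A [B C]]].
    exists (u :: l'); split; [apply pth2 with v; auto|]. split.
    + intros x [->|Hx]; [left; left; auto|]. destruct (B x Hx); auto. left; right; auto.
    + simpl; lia.
Qed.

Lemma pth_prefix u v l x : pth u v l -> In x l ->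
  exists l', pth u x l' /\ (length l' <= length l)%nat /\ incl l' l.
Proof.
  induction 1; intros Hx.
  - destruct Hx as [<-|[]]. exists [v]; split; [constructor|split; [simpl; lia|apply incl_refl]].
  - destruct Hx as [<-|Hx].
    + exists [u]; split; [constructor|]. split; simpl. lia.
      intros y [<-|[]]; left; auto.
    + destruct (IHpth Hx) as [l' [A [B C]]].
      exists (u :: l'); split; [apply pth2 with v; auto|]. split; simpl. lia.
      intros y [<-|Hy]; [left; auto|right; auto].
Qed.

Lemma pth_suffix u v l x : pth u v l -> In x l ->
  exists l', pth x v l' /\ (length l' <= length l)%nat /\ incl l' l.
Proof.
  induction 1; intros Hx.
  - destruct Hx as [<-|[]]. exists [v]; split; [constructor|split; [simpl; lia|apply incl_refl]].
  - destruct Hx as [<-|Hx].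
    + exists (u :: l); split; [apply pth2 with v; auto|]. split; auto. apply incl_refl.
    + destruct (IHpth Hx) as [l' [A [B C]]].
      exists l'; split; auto. split; simpl. lia. intros y Hy; right; auto.
Qed.

Lemma last_irrel (l : list V) d d' : l <> [] -> last l d = last l d'.
Proof.
  induction l as [|a l IH]; intros H; [congruence|].
  destruct l as [|b l]; simpl; auto. apply IH; discriminate.
Qed.

Lemma pth_simple u v l : pth u v l -> hd_error l = Some u /\ last l u = v /\ chain src tgt l.
Proof.
  induction 1; simpl; auto.
  destruct IHpth as [A [B C]].
  destruct l as [|b l]; [discriminate|]. simpl in A. injection A as ->.
  split; auto. split; auto.
  rewrite <- B. apply last_irrel. discriminate.
Qed.

Lemma simple_pth u v l : hd_error l = Some u -> last l u = v -> chain src tgt l -> pth u v l.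
Proof.
  revert u. induction l as [|a l IH]; intros u H1 H2 H3; [discriminate|].
  simpl in H1. injection H1 as ->.
  destruct l as [|b l].
  - simpl in H2. subst. constructor.
  - destruct H3 as [Ha Hc]. apply pth2 with b; auto. apply IH; auto.
    rewrite <- H2. change (last (b::l) b = last (b::l) u). apply last_irrel. discriminate.
Qed.

Definition gdn (u v : V) : nat :=
  epsilon (inhabits 0%nat) (fun n => walk u v n /\ forall m, walk u v m -> (n <= m)%nat).

Lemma graph_dist_gdn u v : graph_dist src tgt u v = INR (gdn u v).
Proof. reflexivity. Qed.

Hypothesis Hcon : connected src tgt.

Lemma gdn_spec u v : walk u v (gdn u v) /\ forall m, walk u v m -> (gdn u v <= m)%nat.
Proof.
  unfold gdn. apply epsilon_spec. apply min_exists. apply Hcon.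
Qed.

Lemma gdn_walk u v : walk u v (gdn u v).
Proof. apply gdn_spec. Qed.

Lemma gdn_le u v m : walk u v m -> (gdn u v <= m)%nat.
Proof. apply gdn_spec. Qed.

Lemma gdn_refl u : gdn u u = 0%nat.
Proof. pose proof (gdn_le (walk_nil src tgt u)). lia. Qed.

Lemma gdn_sym u v : gdn u v = gdn v u.
Proof.
  apply Nat.le_antisymm; apply gdn_le; apply walk_sym; apply gdn_walk.
Qed.

Lemma gdn_tri u v w : (gdn u w <= gdn u v + gdn v w)%nat.
Proof. apply gdn_le. apply walk_app with v; apply gdn_walk. Qed.

Lemma gdn_adj u v : adj u v -> (gdn u v <= 1)%nat.
Proof. intros H. apply gdn_le. apply walk_cons with v; auto. constructor. Qed.

Lemma gdn_pth u v l : pth u v l -> (S (gdn u v) <= length l)%nat.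
Proof. intros H. pose proof (gdn_le (pth_walk H)). destruct H; simpl in *; lia. Qed.

Lemma shortest_pth u v : exists l, pth u v l /\ length l = S (gdn u v).
Proof. apply walk_pth. apply gdn_walk. Qed.

End G.
Section T.
Variables (V E : Type) (src tgt : E -> V).
Notation adj := (adj src tgt).
Notation walk := (walk src tgt).
Notation pth := (pth src tgt).
Notation gdn := (gdn src tgt).
Hypothesis Htree : simplicial_tree src tgt.

Lemma Tcon : connected src tgt.
Proof. apply Htree. Qed.

Lemma shortcut a b l : pth a b l -> ~ NoDup l ->
  exists l', pth a b l' /\ (length l' < length l)%nat /\ incl l' l.
Proof.
  induction 1 as [v|u v w l Ha Hp IH]; intros Hnd.
  - exfalso; apply Hnd. constructor; [intros []|constructor].
  - destruct (classic (In u l)) as [Hin|Hnin].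
    + destruct (pth_suffix Hp Hin) as [l' [A [B C]]].
      exists l'; split; auto. split; simpl. lia. intros y Hy; right; auto.
    + assert (~ NoDup l) as Hnd'. { intros Hn; apply Hnd; constructor; auto. }
      destruct (IH Hnd') as [l' [A [B C]]].
      exists (u :: l'); split; [apply pth2 with v; auto|]. split; simpl. lia.
      intros y [<-|Hy]; [left; auto|right; auto].
Qed.

Lemma nodup_sub a b : forall n l, (length l <= n)%nat -> pth a b l ->
  exists l0, pth a b l0 /\ NoDup l0 /\ incl l0 l.
Proof.
  induction n as [|n IH]; intros l Hl Hp.
  - destruct Hp; simpl in Hl; lia.
  - destruct (classic (NoDup l)) as [Hn|Hn].
    + exists l; split; auto. split; auto. apply incl_refl.
    + destruct (shortcut Hp Hn) as [l' [A [B C]]].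
      destruct (IH l') as [l0 [D [F G]]]; auto. lia.
      exists l0; split; auto. split; auto. intros y Hy; auto.
Qed.

Lemma shortest_nodup a b l : pth a b l -> length l = S (gdn a b) -> NoDup l.
Proof.
  intros Hp Hl. apply NNPP; intros Hn.
  destruct (shortcut Hp Hn) as [l' [A [B C]]].
  pose proof (gdn_pth Tcon A). lia.
Qed.

Lemma tree_sep (R : V -> Prop) a b W L q :
  pth a b W -> (forall x, In x W -> R x) ->
  pth a b L -> length L = S (gdn a b) -> In q L -> R q.
Proof.
  intros HW HR HL Hlen Hq.
  destruct (@nodup_sub a b (length W) W (le_n _) HW) as [l0 [A [B C]]].
  pose proof (shortest_nodup HL Hlen) as HLn.
  destruct Htree as [_ [_ Hu]].
  assert (l0 = L) as Heq.
  { destruct (pth_simple A) as [A1 [A2 A3]].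
    destruct (pth_simple HL) as [L1 [L2 L3]].
    apply (Hu a b); repeat split; auto. }
  subst. auto.
Qed.

Inductive chV (Q : V -> Prop) (J : nat) : V -> V -> Prop :=
| chV1 v : Q v -> chV Q J v v
| chV2 u v w : Q u -> (gdn u v <= J)%nat -> chV Q J v w -> chV Q J u w.

Lemma chV_pth Q J a b : chV Q J a b ->
  exists W, pth a b W /\ forall x, In x W -> exists v, Q v /\ (gdn v x <= J)%nat.
Proof.
  induction 1 as [v Hv|u v w Hu Hd Hc IH].
  - exists [v]; split; [constructor|]. intros x [<-|[]]. exists v; split; auto.
    rewrite (gdn_refl Tcon). lia.
  - destruct IH as [W [HW HWR]].
    destruct (shortest_pth Tcon u v) as [l1 [Hl1 Hlen]].
    destruct (pth_app Hl1 HW) as [l [A [B _]]].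
    exists l; split; auto. intros x Hx. destruct (B x Hx) as [Hx1|Hx2]; auto.
    exists u; split; auto.
    destruct (pth_prefix Hl1 Hx1) as [l' [C [D _]]].
    pose proof (gdn_pth Tcon C). lia.
Qed.

Lemma tree_star Q J a b L q : chV Q J a b ->
  pth a b L -> length L = S (gdn a b) -> In q L ->
  exists v, Q v /\ (gdn v q <= J)%nat.
Proof.
  intros Hc HL Hlen Hq. destruct (chV_pth Hc) as [W [HW HR]].
  exact (@tree_sep (fun x => exists v, Q v /\ (gdn v x <= J)%nat) a b W L q HW HR HL Hlen Hq).
Qed.

Lemma ivt (A B : V -> Prop) a b l : pth a b l -> (forall x, In x l -> A x \/ B x) ->
  A a -> B b -> exists q q', In q l /\ In q' l /\ A q /\ B q' /\ (gdn q q' <= 1)%nat.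
Proof.
  induction 1 as [v|u v w l Ha Hp IH]; intros HAB HA HB.
  - exists v, v. rewrite (gdn_refl Tcon). simpl; intuition.
  - destruct (classic (B u)) as [HBu|HBu].
    + exists u, u. rewrite (gdn_refl Tcon). simpl; intuition.
    + assert (Hv : In v l) by (destruct Hp; simpl; auto).
      destruct (HAB v (or_intror Hv)) as [HAv|HBv].
      * destruct (IH (fun x Hx => HAB x (or_intror Hx)) HAv HB) as [q [q' [A1 [A2 [A3 [A4 A5]]]]]].
        exists q, q'; simpl; intuition.
      * exists u, v; simpl; intuition. apply (gdn_adj Tcon); auto.
Qed.

End T.
Lemma fold_min_le (l : list R) x : fold_left Rmin l x <= x.
Proof.
  revert x; induction l as [|y l IH]; intros x; simpl. lra.
  eapply Rle_trans; [apply IH|]. apply Rmin_l.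
Qed.

Lemma fold_min_ge (l : list R) x m : m <= x -> (forall y, In y l -> m <= y) -> m <= fold_left Rmin l x.
Proof.
  revert x; induction l as [|y l IH]; intros x Hx Hl; simpl; auto.
  apply IH. apply Rmin_glb; auto. apply Hl; left; auto.
  intros z Hz; apply Hl; right; auto.
Qed.

Lemma list_min_le x l : list_min (x :: l) <= x.
Proof. apply fold_min_le. Qed.

Lemma list_min_ge x l m : (forall y, In y (x :: l) -> m <= y) -> m <= list_min (x :: l).
Proof. intros H. apply fold_min_ge; auto. apply H; left; auto. intros y Hy; apply H; right; auto. Qed.

Section Round.
Variables (V E : Type) (src tgt : E -> V).
Notation gdn := (gdn src tgt).
Hypothesis Hcon : connected src tgt.

Definition rnd (p : tpoint V E) : V :=
  match proj1_sig p with PV _ v => v | PE _ e _ => src e end.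

Lemma gdn_se e : (gdn (src e) (tgt e) <= 1)%nat.
Proof. apply (gdn_adj Hcon). exists e; left; auto. Qed.

Lemma gdn_tri4 a a' b b' : (gdn a b <= gdn a a' + gdn a' b' + gdn b' b)%nat.
Proof.
  pose proof (gdn_tri Hcon a a' b). pose proof (gdn_tri Hcon a' b' b). lia.
Qed.

Lemma near a a' b b' : (gdn a a' <= 1)%nat -> (gdn b b' <= 1)%nat ->
  INR (gdn a b) <= INR (gdn a' b') + 2 /\ INR (gdn a' b') <= INR (gdn a b) + 2.
Proof.
  intros H1 H2. pose proof (gdn_tri4 a a' b b'). pose proof (gdn_tri4 a' a b' b).
  rewrite (gdn_sym Hcon a' a) in H0. rewrite (gdn_sym Hcon b' b) in H.
  apply le_INR in H; apply le_INR in H0; apply le_INR in H1; apply le_INR in H2;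
  rewrite ?plus_INR in *; simpl in *; split; lra.
Qed.

Lemma n0 a : (gdn a a <= 1)%nat.
Proof. rewrite (gdn_refl Hcon). lia. Qed.
Lemma n1 e : (gdn (tgt e) (src e) <= 1)%nat.
Proof. rewrite (gdn_sym Hcon). apply gdn_se. Qed.

Ltac upm := repeat (eapply Rle_trans; [apply Rmin_l|]).

Lemma round_ok p q :
  tdist src tgt p q <= INR (gdn (rnd p) (rnd q)) + 2 /\
  INR (gdn (rnd p) (rnd q)) <= tdist src tgt p q + 2.
Proof.
  destruct p as [p Hp]; destruct q as [q Hq]; unfold tdist, rnd; simpl.
  destruct p as [u|e s]; destruct q as [v|e' t]; simpl in Hp, Hq |- *;
    rewrite ?graph_dist_gdn.
  - unfold list_min; simpl. lra.
  - pose proof (near (n0 u) (n1 e')). pose proof (near (n0 u) (n0 (src e'))).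
    split. upm. lra. match goal with |- ?x <= ?m + 2 => cut (x - 2 <= m); [lra|] end; repeat apply Rmin_glb; lra.
  - pose proof (near (n1 e) (n0 v)). pose proof (near (n0 (src e)) (n0 v)).
    split. upm. lra. match goal with |- ?x <= ?m + 2 => cut (x - 2 <= m); [lra|] end; repeat apply Rmin_glb; lra.
  - destruct (excluded_middle_informative (e = e')) as [<-|Hne].
    + rewrite (gdn_refl Hcon). simpl. split; unfold Rabs; destruct (Rcase_abs (s - t)); lra.
    + pose proof (near (n1 e) (n1 e')). pose proof (near (n0 (src e)) (n0 (src e'))).
      pose proof (near (n1 e) (n0 (src e'))). pose proof (near (n0 (src e)) (n1 e')).
      split. upm. lra. match goal with |- ?x <= ?m + 2 => cut (x - 2 <= m); [lra|] end; repeat apply Rmin_glb; lra.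
Qed.
End Round.
Lemma nat_above (r : R) : exists n : nat, r <= INR n.
Proof.
  destruct (archimed r) as [H1 H2].
  destruct (Z.le_gt_cases (up r) 0) as [Hz|Hz].
  - exists 0%nat. simpl. apply IZR_le in Hz. lra.
  - exists (Z.to_nat (up r)). rewrite INR_IZR_INZ, Z2Nat.id by lia. lra.
Qed.

Section X.
Variables (X : Type) (d : X -> X -> R) (Hm : is_metric d).

Lemma d_nonneg x y : 0 <= d x y.
Proof. apply Hm. Qed.
Lemma d_sym x y : d x y = d y x.
Proof. apply Hm. Qed.
Lemma d_tri x y z : d x z <= d x y + d y z.
Proof. apply Hm. Qed.
Lemma d_refl x : d x x = 0.
Proof. apply Hm. auto. Qed.

Inductive ch (P : X -> Prop) : X -> X -> Prop :=
| ch1 x : P x -> ch P x x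
| ch2 x y z : P x -> d x y <= 1 -> ch P y z -> ch P x z.

Lemma ch_Pl P x y : ch P x y -> P x.
Proof. destruct 1; auto. Qed.
Lemma ch_Pr P x y : ch P x y -> P y.
Proof. induction 1; auto. Qed.

Lemma ch_trans P x y z : ch P x y -> ch P y z -> ch P x z.
Proof. induction 1; intros H'; auto. apply ch2 with y; auto. Qed.

Lemma ch_snoc P x y z : ch P x y -> d y z <= 1 -> P z -> ch P x z.
Proof.
  induction 1; intros Hd Hz.
  - apply ch2 with z; auto. constructor; auto.
  - apply ch2 with y; auto.
Qed.

Lemma ch_sym P x y : ch P x y -> ch P y x.
Proof.
  induction 1. constructor; auto.
  apply ch_snoc with y; auto. rewrite d_sym; auto.
Qed.

Lemma ch_mono (P P' : X -> Prop) x y : (forall z, P z -> P' z) -> ch P x y -> ch P' x y.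
Proof. intros HP; induction 1. constructor; auto. apply ch2 with y; auto. Qed.

Definition isgeod (g : R -> X) x y : Prop :=
  g 0 = x /\ g (d x y) = y /\
  forall s t, 0 <= s <= d x y -> 0 <= t <= d x y -> d (g s) (g t) = Rabs (s - t).

Lemma ch_geod (P : X -> Prop) g x y s t : isgeod g x y -> 0 <= s -> s <= t -> t <= d x y ->
  (forall u, s <= u <= t -> P (g u)) -> ch P (g s) (g t).
Proof.
  intros [G0 [G1 G2]] Hs Hst Ht HP.
  destruct (nat_above (t - s)) as [n Hn].
  revert s Hs Hst Hn HP. induction n as [|n IH]; intros s Hs Hst Hn HP.
  - simpl in Hn. replace s with t by lra. constructor. apply HP; lra.
  - destruct (Rle_dec (t - s) 1) as [H1|H1].
    + apply ch2 with (g t). apply HP; lra.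
      rewrite G2 by lra. unfold Rabs; destruct (Rcase_abs (s - t)); lra.
      constructor. apply HP; lra.
    + apply ch2 with (g (s + 1)). apply HP; lra.
      rewrite G2 by lra. unfold Rabs; destruct (Rcase_abs (s - (s + 1))); lra.
      apply IH; try lra. rewrite S_INR in Hn. lra.
      intros u Hu; apply HP; lra.
Qed.

Lemma geod_d g x y s : isgeod g x y -> 0 <= s <= d x y -> d x (g s) = s /\ d (g s) y = d x y - s.
Proof.
  intros [G0 [G1 G2]] Hs. split.
  - replace (d x (g s)) with (d (g 0) (g s)) by (rewrite G0; auto).
    rewrite G2 by lra. unfold Rabs; destruct (Rcase_abs (0 - s)); lra.
  - replace (d (g s) y) with (d (g s) (g (d x y))) by (rewrite G1; auto).
    rewrite G2 by lra. unfold Rabs; destruct (Rcase_abs (s - d x y)); lra.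
Qed.

Variables (V E : Type) (src tgt : E -> V) (Htree : simplicial_tree src tgt).
Variables (K C : R) (f : X -> tpoint V E) (HK : 1 <= K) (HC : 0 <= C)
  (Hqi : quasi_isometry d (tdist src tgt) K C f).

Notation gdn := (gdn src tgt).
Definition gT x := rnd src (f x).
Definition C1 := C + 2.

Lemma gT_up a b : INR (gdn (gT a) (gT b)) <= K * d a b + C1.
Proof.
  destruct (round_ok (Tcon Htree) (f a) (f b)). destruct Hqi as [H1 _].
  destruct (H1 a b). unfold gT, C1. lra.
Qed.

Lemma gT_lo a b N : INR (gdn (gT a) (gT b)) <= N -> d a b <= K * (N + C1).
Proof.
  intros HN.
  destruct (round_ok (Tcon Htree) (f a) (f b)). destruct Hqi as [H1 _].
  destruct (H1 a b). unfold gT, C1 in *.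
  assert (d a b = K * (1 / K * d a b)) as -> by (field; lra).
  apply Rmult_le_compat_l; lra.
Qed.

Definition JJ : nat := proj1_sig (constructive_indefinite_description _ (nat_above (K + C1))).
Lemma JJ_spec : K + C1 <= INR JJ.
Proof. unfold JJ. destruct (constructive_indefinite_description _ _); auto. Qed.

Lemma ch_chV P x y : ch P x y -> chV src tgt (fun v => exists c, P c /\ v = gT c) JJ (gT x) (gT y).
Proof.
  induction 1 as [x Hx|x y z Hx Hd Hc IH].
  - constructor. eauto.
  - apply chV2 with (gT y); eauto.
    pose proof (gT_up x y). pose proof JJ_spec.
    assert (INR (gdn (gT x) (gT y)) < INR (S JJ)).
    { rewrite S_INR. assert (K * d x y <= K * 1) by (apply Rmult_le_compat_l; lra). lra. }
    apply INR_lt in H1. lia.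
Qed.

Definition Delta := K * (2 * INR JJ + C1) + K * (2 * INR JJ + 1 + C1).

Lemma Delta_pos : 0 <= Delta.
Proof. unfold Delta, C1. pose proof (pos_INR JJ). nra. Qed.

Lemma bottleneck x y g t0 P : isgeod g x y -> 0 <= t0 <= d x y -> ch P x y ->
  exists c, P c /\ d c (g t0) <= Delta.
Proof.
  intros Hg Ht0 Hc.
  pose proof (ch_chV Hc) as Hc1.
  assert (Hg2 : ch (fun z => exists s, 0 <= s <= d x y /\ z = g s) x y).
  { destruct Hg as [G0 [G1 G2]].
    replace (ch (fun z => exists s, 0 <= s <= d x y /\ z = g s) x y) with
      (ch (fun z => exists s, 0 <= s <= d x y /\ z = g s) (g 0) (g (d x y))) by (rewrite G0, G1; auto).
    pose proof (d_nonneg x y).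
    apply ch_geod with x y; try split; auto; try lra.
    intros u Hu; exists u; split; auto. }
  pose proof (ch_chV Hg2) as Hc2.
  destruct (shortest_pth (Tcon Htree) (gT x) (gT y)) as [L [HL Hlen]].
  set (A := fun q => exists s, 0 <= s <= t0 /\ (gdn (gT (g s)) q <= JJ)%nat).
  set (B := fun q => exists s, t0 <= s <= d x y /\ (gdn (gT (g s)) q <= JJ)%nat).
  assert (HAB : forall q, In q L -> A q \/ B q).
  { intros q Hq. destruct (tree_star Htree Hc2 HL Hlen Hq) as [v [[c [[s [Hs ->]] ->]] Hv]].
    destruct (Rle_dec s t0); [left|right]; exists s; split; auto; lra. }
  destruct Hg as [G0 [G1 G2]].
  assert (HA : A (gT x)).
  { exists 0; split; [lra|]. rewrite G0, (gdn_refl (Tcon Htree)). lia. }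
  assert (HB : B (gT y)).
  { exists (d x y); split; [lra|]. rewrite G1, (gdn_refl (Tcon Htree)). lia. }
  destruct (ivt Htree HL HAB HA HB) as [q [q' [Hq [Hq' [[s1 [Hs1 Hd1]] [[s2 [Hs2 Hd2]] Hqq]]]]]].
  destruct (tree_star Htree Hc1 HL Hlen Hq) as [v [[c [Pc ->]] Hv]].
  exists c; split; auto.
  pose proof (gdn_tri (Tcon Htree) (gT (g s1)) q (gT (g s2))) as T1.
  pose proof (gdn_tri (Tcon Htree) q q' (gT (g s2))) as T2.
  rewrite (gdn_sym (Tcon Htree) q' (gT (g s2))) in T2.
  pose proof (gdn_tri (Tcon Htree) (gT c) q (gT (g s1))) as T3.
  rewrite (gdn_sym (Tcon Htree) q (gT (g s1))) in T3.
  assert (E1 : (gdn (gT (g s1)) (gT (g s2)) <= 2 * JJ + 1)%nat) by lia.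
  assert (E2 : (gdn (gT c) (gT (g s1)) <= 2 * JJ)%nat) by lia.
  apply le_INR in E1. apply le_INR in E2. rewrite plus_INR, mult_INR in E1. rewrite mult_INR in E2.
  simpl in E1, E2.
  apply gT_lo in E1. apply gT_lo in E2.
  rewrite G2 in E1 by lra.
  pose proof (d_tri c (g s1) (g t0)). rewrite (G2 s1 t0) in H by lra.
  unfold Rabs in *; destruct (Rcase_abs (s1 - s2)); destruct (Rcase_abs (s1 - t0)); unfold Delta; lra.
Qed.

End X.
Section Forest.
Variables (W : Type) (lev : W -> nat) (par : W -> W).
Hypothesis Hpar : forall w, (0 < lev w)%nat -> lev (par w) = (lev w - 1)%nat.

Definition FE := { w : W | (0 < lev w)%nat }.
Definition fsrc (e : FE) : W := proj1_sig e.
Definition ftgt (e : FE) : W := par (proj1_sig e).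

Notation adjF := (adj fsrc ftgt).
Notation walkF := (walk fsrc ftgt).

Lemma adjF_iff a b : adjF a b <-> ((0 < lev a)%nat /\ b = par a) \/ ((0 < lev b)%nat /\ a = par b).
Proof.
  split.
  - intros [[w Hw] [[H1 H2]|[H1 H2]]]; unfold fsrc, ftgt in *; simpl in *; subst; auto.
  - intros [[H1 H2]|[H1 H2]].
    + exists (exist _ a H1); left; unfold fsrc, ftgt; simpl; auto.
    + exists (exist _ b H1); right; unfold fsrc, ftgt; simpl; auto.
Qed.

Definition anc (k : nat) (w : W) : W := Nat.iter (lev w - k) par w.

Lemma lev_anc k w : (k <= lev w)%nat -> lev (anc k w) = k.
Proof.
  unfold anc. remember (lev w - k)%nat as n. revert w Heqn.
  induction n as [|n IH]; intros w Hn Hk.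
  - simpl. lia.
  - rewrite Nat.iter_succ_r. apply IH. rewrite Hpar by lia. lia. rewrite Hpar by lia. lia.
Qed.

Lemma anc_self w : anc (lev w) w = w.
Proof. unfold anc. rewrite Nat.sub_diag. reflexivity. Qed.

Lemma anc_par k w : (k < lev w)%nat -> anc k (par w) = anc k w.
Proof.
  intros H. unfold anc. rewrite Hpar by lia.
  replace (lev w - k)%nat with (S (lev w - 1 - k)) by lia.
  rewrite Nat.iter_succ_r. reflexivity.
Qed.

Lemma anc_anc k j w : (k <= j)%nat -> (j <= lev w)%nat -> anc k (anc j w) = anc k w.
Proof.
  intros H1 H2. unfold anc at 1. rewrite lev_anc by auto. unfold anc.
  rewrite <- Nat.iter_add. f_equal. lia.
Qed.

Lemma walk_lower u v n : walkF u v n -> exists k, (k <= lev u)%nat /\ (k <= lev v)%nat /\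
  anc k u = anc k v /\ (lev u + lev v <= n + 2 * k)%nat.
Proof.
  induction 1 as [v|u u' v n Ha Hw IH].
  - exists (lev v); repeat split; auto; lia.
  - destruct IH as [k [K1 [K2 [K3 K4]]]].
    apply adjF_iff in Ha. destruct Ha as [[H1 H2]|[H1 H2]].
    + subst u'. rewrite Hpar in * by auto.
      exists k; repeat split; try lia. rewrite <- K3. symmetry. apply anc_par. lia.
    + subst u. pose proof (Hpar H1) as Hl.
      destruct (Nat.eq_dec k (lev u')) as [Hk|Hk].
      * exists (lev (par u')). repeat split; try lia.
        rewrite anc_self. subst k. rewrite anc_self in K3.
        rewrite <- (@anc_anc (lev (par u')) (lev u') v) by lia. rewrite <- K3.
        rewrite <- (@anc_par (lev (par u')) u') by lia. symmetry; apply anc_self.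
      * exists k. repeat split; try lia. rewrite anc_par by lia. auto.
Qed.

Lemma walk_up k u : (k <= lev u)%nat -> walkF u (anc k u) (lev u - k).
Proof.
  remember (lev u - k)%nat as n. revert u Heqn.
  induction n as [|n IH]; intros u Hn Hk.
  - unfold anc. rewrite <- Hn. constructor.
  - apply walk_cons with (par u).
    + apply adjF_iff. left; split; auto. lia.
    + rewrite <- (@anc_par k u) by lia. apply IH; rewrite ?Hpar by lia; lia.
Qed.

Lemma walk_upper k u v : (k <= lev u)%nat -> (k <= lev v)%nat -> anc k u = anc k v ->
  walkF u v ((lev u - k) + (lev v - k)).
Proof.
  intros H1 H2 H3. apply walk_app with (anc k u). apply walk_up; auto.
  rewrite H3. apply walk_sym. apply walk_up; auto.
Qed.

Definition insub (c w : W) : Prop := (lev c <= lev w)%nat /\ anc (lev c) w = c.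

Lemma insub_self c : insub c c.
Proof. split; auto. apply anc_self. Qed.

Lemma cross c w w' : adjF w w' -> insub c w -> ~ insub c w' -> w' = par c.
Proof.
  intros Ha [I1 I2] Hn. apply adjF_iff in Ha. destruct Ha as [[H1 H2]|[H1 H2]].
  - subst w'. destruct (Nat.eq_dec (lev c) (lev w)) as [He|He].
    + rewrite He in I2. rewrite anc_self in I2. subst; auto.
    + exfalso; apply Hn. split. rewrite Hpar by auto. lia.
      rewrite anc_par by lia. auto.
  - subst w. exfalso. apply Hn. pose proof (Hpar H1). split. lia.
    rewrite <- anc_par by lia. auto.
Qed.

Lemma stay c x y l : pth fsrc ftgt x y l -> ~ In (par c) l -> (insub c x <-> insub c y).
Proof.
  induction 1 as [v|u v w l Ha Hp IH]; intros Hn. tauto.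
  assert (Hv : In v l) by (destruct Hp; simpl; auto).
  rewrite <- IH by (intros H; apply Hn; right; auto).
  split; intros Hi; apply NNPP; intros Hni.
  - apply Hn. right. rewrite <- (cross Ha Hi Hni). auto.
  - apply Hn. left. apply (cross (adj_sym Ha) Hi Hni).
Qed.

Lemma forest_unique u v l1 l2 : pth fsrc ftgt u v l1 -> NoDup l1 ->
  pth fsrc ftgt u v l2 -> NoDup l2 -> l1 = l2.
Proof.
  intros H1. revert l2. induction H1 as [v|u u1 v l1 Ha1 Hp1 IH]; intros l2 Hn1 H2 Hn2.
  - inversion H2 as [|a b c l2' Ha2 Hp2]; subst; auto.
    exfalso. inversion Hn2 as [|a b' Hnin Hnd]; subst. apply Hnin. apply (pth_last_in Hp2).
  - inversion H2 as [|a u2 c l2' Ha2 Hp2]; subst.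
    + exfalso. inversion Hn1 as [|a b' Hnin Hnd]; subst. apply Hnin. apply (pth_last_in Hp1).
    + inversion Hn1 as [|a b Hnin1 Hnd1]; subst. inversion Hn2 as [|a b Hnin2 Hnd2]; subst.
      destruct (classic (u1 = u2)) as [<-|Hne].
      * f_equal. apply IH; auto.
      * exfalso.
        pose proof Ha1 as A1. pose proof Ha2 as A2.
        apply adjF_iff in A1, A2.
        destruct A1 as [[P1 Q1]|[P1 Q1]]; destruct A2 as [[P2 Q2]|[P2 Q2]].
        -- apply Hne; congruence.
        --
           subst u1. pose proof (@stay u2 _ _ _ Hp2) as S2. pose proof (@stay u2 _ _ _ Hp1) as S1.
           rewrite <- Q2 in S1, S2.
           assert (insub u2 v) by (apply S2; auto; apply insub_self).
           apply S1 in H; auto. destruct H as [H _].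
           pose proof (Hpar P1). pose proof (Hpar P2). rewrite <- Q2 in H1. lia.
        -- subst u2. pose proof (@stay u1 _ _ _ Hp1) as S1. pose proof (@stay u1 _ _ _ Hp2) as S2.
           rewrite <- Q1 in S1, S2.
           assert (insub u1 v) by (apply S1; auto; apply insub_self).
           apply S2 in H; auto. destruct H as [H _].
           pose proof (Hpar P1). pose proof (Hpar P2). rewrite <- Q1 in H0. lia.
        -- pose proof (@stay u1 _ _ _ Hp1) as S1. pose proof (@stay u2 _ _ _ Hp2) as S2.
           rewrite <- Q1 in S1. rewrite <- Q2 in S2.
           assert (insub u1 v) as [I1 I2] by (apply S1; auto; apply insub_self).
           assert (insub u2 v) as [J1 J2] by (apply S2; auto; apply insub_self).
           pose proof (Hpar P1). pose proof (Hpar P2).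
           assert (lev u1 = lev u2) as Hl by (rewrite <- Q1 in H; rewrite <- Q2 in H0; lia).
           apply Hne. rewrite <- I2, <- J2, Hl. auto.
Qed.

Hypothesis Hroot : forall u v, anc 0 u = anc 0 v.

Lemma forest_tree : simplicial_tree fsrc ftgt.
Proof.
  split; [split|split].
  - intros [w Hw]; unfold fsrc, ftgt; simpl. intros He. pose proof (Hpar Hw). rewrite <- He in H. lia.
  - intros [w Hw] [w' Hw']; unfold fsrc, ftgt; simpl. intros [[H1 H2]|[H1 H2]].
    + subst. f_equal. apply proof_irrelevance.
    + exfalso. pose proof (Hpar Hw). pose proof (Hpar Hw'). rewrite <- H1 in H0. rewrite H2 in H. lia.
  - intros u v. exists ((lev u - 0) + (lev v - 0))%nat. apply walk_upper; auto; lia.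
  - intros u v l1 l2 [A1 [A2 [A3 A4]]] [B1 [B2 [B3 B4]]].
    apply forest_unique with u v; auto; apply simple_pth; auto.
Qed.

End Forest.
Lemma fl_ex (r : R) : exists n : nat, 0 <= r -> INR n <= r < INR n + 1.
Proof.
  destruct (Rlt_or_le r 0) as [Hr|Hr].
  - exists 0%nat; intros; lra.
  - destruct (archimed r) as [H1 H2].
    assert (Hu : (0 < up r)%Z) by (apply lt_IZR; lra).
    exists (Z.to_nat (up r - 1)). intros _.
    rewrite INR_IZR_INZ, Z2Nat.id by lia. rewrite minus_IZR. simpl. lra.
Qed.

Definition fl (r : R) : nat := proj1_sig (constructive_indefinite_description _ (fl_ex r)).

Lemma fl_spec r : 0 <= r -> INR (fl r) <= r < INR (fl r) + 1.
Proof. unfold fl. destruct (constructive_indefinite_description _ _); auto. Qed.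

Lemma fl_INR n : fl (INR n) = n.
Proof.
  destruct (fl_spec (pos_INR n)) as [H1 H2].
  apply INR_le in H1. rewrite <- S_INR in H2. apply INR_lt in H2. lia.
Qed.

Lemma fl_ge r k : 0 <= r -> INR k <= r -> (k <= fl r)%nat.
Proof.
  intros H0 H. destruct (fl_spec H0) as [H1 H2]. rewrite <- S_INR in H2.
  assert (INR k < INR (S (fl r))) by lra. apply INR_lt in H3. lia.
Qed.

Section Build.
Variables (X : Type) (d : X -> X -> R) (Hm : is_metric d) (Hgeo : geodesic d) (Hprop : proper d) (o : X).
Variable Dl : R.
Hypothesis HDl : 0 <= Dl.
Hypothesis Hbn : forall x y g t0 P, isgeod d g x y -> 0 <= t0 <= d x y -> ch d P x y ->
  exists c, P c /\ d c (g t0) <= Dl.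

Definition h x := d o x.
Lemma h_nonneg x : 0 <= h x.
Proof. apply (d_nonneg Hm). Qed.

Definition gx (x : X) : R -> X := proj1_sig (constructive_indefinite_description _ (Hgeo o x)).
Lemma gx_geod x : isgeod d (gx x) o x.
Proof. unfold gx. destruct (constructive_indefinite_description _ _); auto. Qed.

Lemma gx_h x s : 0 <= s <= h x -> h (gx x s) = s /\ d (gx x s) x = h x - s.
Proof. intros Hs. apply (geod_d (gx_geod x)). auto. Qed.
Lemma gx0 x : gx x 0 = o.
Proof. apply (gx_geod x). Qed.
Lemma gx1 x : gx x (h x) = x.
Proof. apply (gx_geod x). Qed.

Definition lev x := fl (h x).
Definition Up (k : nat) z := INR k <= h z.
Lemma lev_spec x : INR (lev x) <= h x < INR (lev x) + 1.
Proof. apply fl_spec, h_nonneg. Qed.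
Lemma Up_lev x : Up (lev x) x.
Proof. apply lev_spec. Qed.
Lemma Up_mono k k' z : (k <= k')%nat -> Up k' z -> Up k z.
Proof. unfold Up. intros H1 H2. apply le_INR in H1. lra. Qed.
Lemma Up0 z : Up 0 z.
Proof. unfold Up; simpl. apply h_nonneg. Qed.

Lemma ch_gx x s t (P : X -> Prop) : 0 <= s -> s <= t -> t <= h x ->
  (forall u, s <= u <= t -> P (gx x u)) -> ch d P (gx x s) (gx x t).
Proof. intros. apply ch_geod with o x; auto. apply gx_geod. Qed.

Lemma ch_gx_x x s (P : X -> Prop) : 0 <= s -> s <= h x ->
  (forall u, s <= u <= h x -> P (gx x u)) -> ch d P (gx x s) x.
Proof.
  intros H1 H2 H3. pose proof (@ch_gx x s (h x) P H1 H2 (Rle_refl _) H3) as H.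
  rewrite gx1 in H. exact H.
Qed.

Lemma ch_gx_up x k : (k <= lev x)%nat -> ch d (Up k) (gx x (INR k)) x.
Proof.
  intros Hk. pose proof (lev_spec x). apply le_INR in Hk.
  apply ch_gx_x; try lra. apply pos_INR.
  intros u Hu. unfold Up. rewrite (proj1 (@gx_h x u ltac:(pose proof (pos_INR k); lra))). lra.
Qed.

Lemma lev_gx x k : (k <= lev x)%nat -> lev (gx x (INR k)) = k.
Proof.
  intros Hk. pose proof (lev_spec x). apply le_INR in Hk. unfold lev.
  rewrite (proj1 (@gx_h x (INR k) ltac:(pose proof (pos_INR k); lra))). apply fl_INR.
Qed.

Definition eqv x y := lev x = lev y /\ ch d (Up (lev x)) x y.
Lemma eqv_refl x : eqv x x.
Proof. split; auto. constructor. apply Up_lev. Qed.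
Lemma eqv_sym x y : eqv x y -> eqv y x.
Proof. intros [H1 H2]; split; auto. rewrite <- H1. apply (ch_sym Hm); auto. Qed.
Lemma eqv_trans x y z : eqv x y -> eqv y z -> eqv x z.
Proof.
  intros [H1 H2] [H3 H4]; split; [congruence|]. apply (ch_trans H2). rewrite H1; auto.
Qed.

Definition rho x := epsilon (inhabits x) (fun y => eqv x y).
Lemma rho_eqv x : eqv x (rho x).
Proof. unfold rho. apply epsilon_spec. exists x. apply eqv_refl. Qed.
Lemma rho_eq x y : eqv x y -> rho x = rho y.
Proof.
  intros H. unfold rho.
  assert ((fun z => eqv x z) = (fun z => eqv y z)) as ->.
  { apply functional_extensionality; intros z. apply propositional_extensionality.
    split; intros; eauto using eqv_trans, eqv_sym. }
  f_equal. apply proof_irrelevance.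
Qed.
Lemma rho_rho x : rho (rho x) = rho x.
Proof. apply rho_eq. apply eqv_sym, rho_eqv. Qed.

Definition VV := { x : X | rho x = x }.
Definition cls (x : X) : VV := exist _ (rho x) (rho_rho x).
Lemma cls_eq x y : eqv x y -> cls x = cls y.
Proof. intros H. unfold cls. apply subset_eq_compat. apply rho_eq; auto. Qed.
Lemma cls_inv x y : cls x = cls y -> eqv x y.
Proof.
  intros H. unfold cls in H. injection H as H.
  apply eqv_trans with (rho x). apply rho_eqv. rewrite H. apply eqv_sym, rho_eqv.
Qed.
Lemma cls_val v : cls (proj1_sig v) = v.
Proof. destruct v as [x Hx]. unfold cls. apply subset_eq_compat. auto. Qed.

Definition levV (v : VV) := lev (proj1_sig v).
Lemma levV_cls x : levV (cls x) = lev x.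
Proof. unfold levV, cls; simpl. symmetry. apply (rho_eqv x). Qed.

Definition pp x := gx x (INR (lev x) - 1).
Lemma pp_h x : (0 < lev x)%nat -> h (pp x) = INR (lev x - 1) /\ lev (pp x) = (lev x - 1)%nat.
Proof.
  intros H. pose proof (lev_spec x).
  assert (INR (lev x - 1) = INR (lev x) - 1) as E by (rewrite minus_INR by lia; simpl; lra).
  assert (1 <= INR (lev x)) by (apply (le_INR 1); lia).
  assert (h (pp x) = INR (lev x - 1)) as E2.
  { unfold pp. rewrite (proj1 (@gx_h x (INR (lev x) - 1) ltac:(lra))). lra. }
  split; auto. unfold lev at 1. rewrite E2. apply fl_INR.
Qed.
Lemma pp_ch x : (0 < lev x)%nat -> ch d (Up (lev x - 1)) (pp x) x.
Proof.
  intros H. pose proof (lev_spec x).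
  assert (INR (lev x - 1) = INR (lev x) - 1) as E by (rewrite minus_INR by lia; simpl; lra).
  assert (1 <= INR (lev x)) by (apply (le_INR 1); lia).
  unfold pp. apply ch_gx_x; try lra.
  intros u Hu. unfold Up. rewrite (proj1 (@gx_h x u ltac:(lra))). lra.
Qed.

Definition parV (v : VV) : VV :=
  match levV v with 0%nat => v | S _ => cls (pp (proj1_sig v)) end.

Lemma parV_pos v : (0 < levV v)%nat -> parV v = cls (pp (proj1_sig v)).
Proof. unfold parV. destruct (levV v); [lia|auto]. Qed.

Lemma HparV : forall w, (0 < levV w)%nat -> levV (parV w) = (levV w - 1)%nat.
Proof.
  intros w Hw. rewrite parV_pos by auto. rewrite levV_cls. apply pp_h. auto.
Qed.

Lemma anc_cls : forall n x k z, (lev x - k)%nat = n -> (k <= lev x)%nat -> lev z = k ->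
  ch d (Up k) z x -> anc levV parV k (cls x) = cls z.
Proof.
  induction n as [|n IH]; intros x k z Hn Hk Hz Hc.
  - unfold anc. rewrite levV_cls. replace (lev x - k)%nat with 0%nat by lia. simpl.
    apply cls_eq. apply eqv_sym. split; [lia|]. rewrite Hz; auto.
  - rewrite <- (anc_par HparV) by (rewrite levV_cls; lia).
    rewrite parV_pos by (rewrite levV_cls; lia). simpl.
    pose proof (rho_eqv x) as [R1 R2].
    destruct (pp_h (x := rho x) ltac:(lia)) as [_ P2].
    apply IH; try lia.
    apply (ch_trans Hc). apply (ch_trans (y := rho x)).
    + apply (ch_mono (P := Up (lev x))); auto. intros; apply Up_mono with (lev x); auto.
    + apply (ch_sym Hm). apply (ch_mono (P := Up (lev (rho x) - 1))).
      intros; apply Up_mono with (lev (rho x) - 1)%nat; auto. lia.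
      apply pp_ch. lia.
Qed.

Lemma anc_geo x k : (k <= lev x)%nat -> anc levV parV k (cls x) = cls (gx x (INR k)).
Proof.
  intros Hk. apply anc_cls with (lev x - k)%nat; auto. apply lev_gx; auto. apply ch_gx_up; auto.
Qed.

Lemma HrootV : forall u v, anc levV parV 0 u = anc levV parV 0 v.
Proof.
  intros u v. rewrite <- (cls_val u), <- (cls_val v).
  rewrite !anc_geo by lia. simpl. rewrite !gx0. auto.
Qed.

Definition TE := FE levV.
Definition Tsrc : TE -> VV := fsrc (lev := levV).
Definition Ttgt : TE -> VV := ftgt parV.

Lemma T'tree : simplicial_tree Tsrc Ttgt.
Proof. apply forest_tree. apply HparV. apply HrootV. Qed.

Lemma T'con : connected Tsrc Ttgt.
Proof. apply T'tree. Qed.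

Notation gdV := (gdn Tsrc Ttgt).

Lemma dist_upper x y k : (k <= lev x)%nat -> (k <= lev y)%nat -> ch d (Up k) x y ->
  (gdV (cls x) (cls y) <= (lev x - k) + (lev y - k))%nat.
Proof.
  intros Hx Hy Hc. apply (gdn_le T'con).
  rewrite <- (levV_cls x), <- (levV_cls y).
  apply walk_upper. apply HparV. rewrite levV_cls; auto. rewrite levV_cls; auto.
  rewrite !anc_geo by auto. apply cls_eq. split. rewrite !lev_gx; auto.
  rewrite lev_gx by auto.
  apply (ch_trans (y := x)). apply ch_gx_up; auto.
  apply (ch_trans Hc). apply (ch_sym Hm). apply ch_gx_up; auto.
Qed.

Lemma dist_lower x y : exists k, (k <= lev x)%nat /\ (k <= lev y)%nat /\ ch d (Up k) x y /\
  (lev x + lev y <= gdV (cls x) (cls y) + 2 * k)%nat.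
Proof.
  pose proof (gdn_walk T'con (cls x) (cls y)) as Hw.
  destruct (walk_lower HparV Hw) as [k [K1 [K2 [K3 K4]]]].
  rewrite !levV_cls in *. exists k; repeat split; auto.
  rewrite !anc_geo in K3 by auto. apply cls_inv in K3. destruct K3 as [_ K3].
  rewrite lev_gx in K3 by auto.
  apply (ch_trans (y := gx x (INR k))). apply (ch_sym Hm). apply ch_gx_up; auto.
  apply (ch_trans K3). apply ch_gx_up; auto.
Qed.


Lemma ch_o_x x (P : X -> Prop) : (forall u, 0 <= u <= h x -> P (gx x u)) -> ch d P o x.
Proof.
  intros H. pose proof (@ch_gx_x x 0 P (Rle_refl _) (h_nonneg x) H) as C. rewrite gx0 in C. exact C.
Qed.

Lemma far x y g s : isgeod d g x y -> 0 <= s <= d x y -> h x + h y - d x y - 2 * Dl <= 2 * h (g s).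
Proof.
  intros Hg Hs.
  set (P := fun c => (exists u, 0 <= u <= h x /\ c = gx x u) \/ (exists u, 0 <= u <= h y /\ c = gx y u)).
  assert (Hc : ch d P x y).
  { apply (ch_trans (y := o)).
    - apply (ch_sym Hm). apply ch_o_x. intros u Hu; left; exists u; auto.
    - apply ch_o_x. intros u Hu; right; exists u; auto. }
  destruct (Hbn Hg Hs Hc) as [c [Pc Hcd]].
  destruct (geod_d Hg Hs) as [D1 D2].
  pose proof (d_tri Hm o (g s) c) as T1. rewrite (d_sym Hm (g s) c) in T1.
  fold (h c) (h (g s)) in T1.
  pose proof (d_tri Hm o (g s) y) as T2. fold (h y) (h (g s)) in T2.
  pose proof (d_tri Hm o (g s) x) as T3. fold (h x) (h (g s)) in T3. rewrite (d_sym Hm (g s) x) in T3.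
  destruct Pc as [[u [Hu ->]]|[u [Hu ->]]]; destruct (@gx_h _ u Hu) as [H1 H2]; rewrite H1 in T1.
  - pose proof (d_tri Hm (gx x u) (g s) x) as T4. rewrite H2, (d_sym Hm (g s) x) in T4. lra.
  - pose proof (d_tri Hm (gx y u) (g s) y) as T4. rewrite H2 in T4. lra.
Qed.

Lemma nearX x y k : (k <= lev x)%nat -> (k <= lev y)%nat -> ch d (Up k) x y ->
  d x y <= h x + h y - 2 * INR k + 2 * (Dl + 1) + 2 * Dl.
Proof.
  intros Hx Hy Hc.
  pose proof (lev_spec x). pose proof (lev_spec y). apply le_INR in Hx. apply le_INR in Hy.
  pose proof (d_tri Hm x o y) as T0. rewrite (d_sym Hm x o) in T0. fold (h x) (h y) in T0.
  destruct (Rlt_or_le (INR k) (Dl + 1)) as [Hk|Hk]. lra.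
  set (t0 := INR k - (Dl + 1)).
  set (P := fun c => (exists u, 0 <= u <= h y /\ c = gx y u) \/ Up k c).
  assert (HcP : ch d P o x).
  { apply (ch_trans (y := y)).
    - apply ch_o_x. intros u Hu; left; exists u; auto.
    - apply (ch_sym Hm). apply (ch_mono (P := Up k)); auto. intros; right; auto. }
  assert (Ht0 : 0 <= t0 <= d o x) by (unfold t0; fold (h x); lra).
  destruct (Hbn (gx_geod x) Ht0 HcP) as [c [Pc Hcd]].
  destruct (@gx_h x t0 Ht0) as [A1 A2].
  pose proof (d_tri Hm o (gx x t0) c) as T1. fold (h c) (h (gx x t0)) in T1.
  rewrite (d_sym Hm (gx x t0) c), A1 in T1.
  pose proof (d_tri Hm o c (gx x t0)) as T2. fold (h c) (h (gx x t0)) in T2. rewrite A1 in T2.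
  destruct Pc as [[u [Hu ->]]|Hup].
  - destruct (@gx_h y u Hu) as [B1 B2]. rewrite B1 in T1, T2.
    assert (Ht0y : 0 <= t0 <= h y) by (unfold t0; lra).
    destruct (@gx_h y t0 Ht0y) as [C1' C2'].
    destruct (gx_geod y) as [_ [_ G2]].
    pose proof (G2 u t0 Hu Ht0y) as Gu.
    pose proof (d_tri Hm x (gx x t0) y) as S1.
    pose proof (d_tri Hm (gx x t0) (gx y u) y) as S2.
    pose proof (d_tri Hm (gx y u) (gx y t0) y) as S3.
    rewrite (d_sym Hm x (gx x t0)), A2 in S1. rewrite C2' in S3. rewrite (d_sym Hm (gx x t0) (gx y u)) in S2.
    rewrite Gu in S3. unfold Rabs in S3; destruct (Rcase_abs (u - t0)); unfold t0 in *; lra.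
  - unfold Up in Hup. unfold t0 in *. lra.
Qed.


Lemma upper_bd x y : INR (gdV (cls x) (cls y)) <= d x y + 2 * Dl + 2.
Proof.
  destruct (Hgeo x y) as [g Hg]. change (isgeod d g x y) in Hg.
  pose proof (lev_spec x). pose proof (lev_spec y).
  pose proof (d_tri Hm o x y) as T1. pose proof (d_tri Hm o y x) as T2. rewrite (d_sym Hm y x) in T2.
  fold (h x) (h y) in T1, T2.
  pose proof (d_nonneg Hm x y).
  assert (Hch : forall k, (forall s, 0 <= s <= d x y -> Up k (g s)) -> ch d (Up k) x y).
  { intros k Hk. destruct Hg as [G0 [G1 G2]].
    pose proof (@ch_geod X d (Up k) g x y 0 (d x y) (conj G0 (conj G1 G2)) (Rle_refl _) H1 (Rle_refl _)) as C.
    rewrite G0, G1 in C. apply C. intros; apply Hk; lra. }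
  set (G := (h x + h y - d x y) / 2).
  destruct (Rlt_or_le (G - Dl) 0) as [HG|HG].
  - pose proof (dist_upper (k := 0) (le_0_n _) (le_0_n _) (Hch 0%nat (fun s _ => Up0 _))) as U.
    rewrite !Nat.sub_0_r in U. apply le_INR in U. rewrite plus_INR in U. unfold G in HG. lra.
  - set (k := fl (G - Dl)). destruct (fl_spec HG) as [F1 F2]. fold k in F1, F2.
    assert (Kx : (k <= lev x)%nat) by (apply fl_ge; [apply h_nonneg|unfold G in *; lra]).
    assert (Ky : (k <= lev y)%nat) by (apply fl_ge; [apply h_nonneg|unfold G in *; lra]).
    assert (HU : forall s, 0 <= s <= d x y -> Up k (g s)).
    { intros s Hs. pose proof (far Hg Hs). unfold Up. unfold G in *. lra. }
    pose proof (dist_upper Kx Ky (Hch k HU)) as U.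
    apply le_INR in U. rewrite plus_INR, !minus_INR in U by auto. unfold G in *. lra.
Qed.

Lemma lower_bd x y : d x y <= INR (gdV (cls x) (cls y)) + 4 * Dl + 4.
Proof.
  destruct (dist_lower x y) as [k [K1 [K2 [K3 K4]]]].
  pose proof (nearX K1 K2 K3). pose proof (lev_spec x). pose proof (lev_spec y).
  apply le_INR in K4. rewrite !plus_INR, mult_INR in K4. simpl in K4. lra.
Qed.

Definition Fmap (x : X) : tpoint VV TE := exist (@valid_point VV TE) (PV TE (cls x)) I.

Lemma Fmap_dist a b : tdist Tsrc Ttgt (Fmap a) (Fmap b) = INR (gdV (cls a) (cls b)).
Proof. unfold tdist, Fmap; simpl. unfold list_min; simpl. rewrite graph_dist_gdn. ring. Qed.

Lemma Fmap_dense p : exists x, tdist Tsrc Ttgt (Fmap x) p <= 1.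
Proof.
  destruct p as [[v|e t] Hp].
  - exists (proj1_sig v). unfold tdist, Fmap; simpl. unfold list_min; simpl. rewrite graph_dist_gdn.
    rewrite cls_val, (gdn_refl T'con). simpl. lra.
  - exists (proj1_sig (Tsrc e)). unfold tdist, Fmap; simpl. rewrite cls_val, !graph_dist_gdn.
    rewrite (gdn_refl T'con). simpl in Hp |- *. eapply Rle_trans; [apply Rmin_l|]. lra.
Qed.

Lemma locfin : locally_finite Tsrc Ttgt.
Proof.
  intros v. set (n := S (levV v)).
  destruct (@Hprop o (INR n + 1) X (fun z y => d z y < / 2)) as [l Hl].
  - intros z x Hx. exists (/2 - d z x); split; [lra|]. intros y Hy.
    pose proof (d_tri Hm z x y). lra.
  - intros x _. exists x. rewrite (d_refl Hm). lra.
  - set (psi := fun z => cls (epsilon (inhabits z) (fun y => lev y = n /\ d z y < / 2))).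
    exists (parV v :: map psi l). intros u [e [[E1 E2]|[E1 E2]]].
    + left. rewrite <- E2, <- E1. reflexivity.
    + right. destruct e as [w Hw]. unfold Tsrc, Ttgt, fsrc, ftgt in E1, E2; simpl in E1, E2. subst w.
      pose proof (HparV Hw) as Hlv. rewrite E2 in Hlv.
      set (y := proj1_sig u).
      assert (Hly : lev y = n) by (unfold n, y; fold (levV u); lia).
      assert (Hb : closed_ball d o (INR n + 1) y).
      { unfold closed_ball. pose proof (lev_spec y). rewrite Hly in H. fold (h y). lra. }
      destruct (Hl y Hb) as [z [Hz Hzy]].
      apply in_map_iff. exists z; split; auto.
      unfold psi. rewrite <- (cls_val u). fold y. apply cls_eq.
      pose proof (@epsilon_spec X (inhabits z) (fun y => lev y = n /\ d z y < / 2) (ex_intro _ y (conj Hly Hzy))) as [S1 S2].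
      set (y' := epsilon (inhabits z) (fun y => lev y = n /\ d z y < / 2)) in *.
      split; [congruence|].
      apply ch2 with y. apply Up_lev. pose proof (d_tri Hm y' z y). rewrite (d_sym Hm y' z) in H. lra.
      constructor. rewrite S1, <- Hly. apply Up_lev.
Qed.

End Build.

Unset Implicit Arguments.
Set Strict Implicit.

Theorem corollary4p26 (X : Type) (d : X -> X -> R) :
  quasi_tree d -> proper d ->
  exists (V E : Type) (src tgt : E -> V),
    @simplicial_tree V E src tgt /\ @locally_finite V E src tgt /\
    exists (C : R) (f : X -> tpoint V E),
      0 <= C /\ one_C_quasi_isometry d (@tdist V E src tgt) C f.
Proof.
  intros [Hm [Hgeo [V [E [src [tgt [Htree [K [C [f [HK [HC Hqi]]]]]]]]]]]] Hprop.
  destruct (classic (inhabited X)) as [[o]|Hne].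
  - pose proof (Delta_pos HK HC) as HD.
    pose proof (bottleneck Hm Htree HK Hqi) as Hbn.
    exists (VV d o), (TE d o), (@Tsrc X d o), (Ttgt Hm Hgeo (o:=o)).
    split; [apply T'tree|]. split; [apply (locfin Hm Hgeo Hprop)|].
    exists (4 * Delta K C + 4), (Fmap Hm o). split; [lra|]. split.
    + intros a b. rewrite Fmap_dist.
      pose proof (upper_bd Hm Hgeo o HD Hbn a b). pose proof (lower_bd Hm Hgeo o HD Hbn a b). lra.
    + intros p. destruct (Fmap_dense Hm Hgeo p) as [x Hx]. exists x. lra.
  - exists Empty_set, Empty_set, (fun e => e), (fun e => e).
    split; [split; [split|split]|split].
    + intros [].
    + intros [].
    + intros [].
    + intros [].
    + intros [].
    + exists 0, (fun x => False_rect _ (Hne (inhabits x))). split; [lra|]. split.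
      * intros a. exfalso; apply Hne; exact (inhabits a).
      * intros [[v|e t] Hp]; destruct v || destruct e.
Qed.
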